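(* Let $q$ be a prime power and let $T\in\mathbb F_q[X,Y,Z]$ be a linear PTR polynomial over $\mathbb F_q$, written as $T(X,Y,Z)=Z+XYZ\,M_1(X,Y,Z)+M_2(X,Y)$ with $M_1(X,Y,Z)=\sum_{i,j,k=0}^{q-3}b_{ijk}X^iY^jZ^k$ and $M_2(X,Y)=\sum_{i,j=1}^{q-2}c_{ij}X^iY^j$. Then $$\sum_{i=0}^{q-3}b_{ijk}=\sum_{i=0}^{q-3}b_{jik}$$ for all $0\le j\le q-3$ and $1\le k\le q-3$.
   Context: A PTR polynomial over $\mathbb F_q$ is a reduced polynomial $T\in\mathbb F_q[X,Y,Z]$ (degree less than $q$ in each variable) satisfying: (a) $T(a,0,z)=T(0,b,z)=z$ for all $a,b,z$; (b) $T(x,1,0)=x$ and $T(1,y,0)=y$ for all $x,y$; (c) for all $a,b,c,d$ with $a\neq c$ there is a unique $x$ with $T(x,a,b)=T(x,c,d)$; (d) for all $a,b,c$ there is a unique $z$ with $T(a,b,z)=c$; (e) for all $a,b,c,d$ with $a\neq c$ there is a unique pair $(y,z)$ with $T(a,y,z)=b$ and $T(c,y,z)=d$ (all variables in $\mathbb F_q$). Every PTR polynomial can be written in the displayed form with these degree bounds. Define $x\oplus y=T(1,x,y)$, $x\odot y=T(x,y,0)$; $T$ is linear if $T(x,y,z)=(x\odot y)\oplus z$ for all $x,y,z\in\mathbb F_q$. *)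

(* Defs.v *)
From HB Require Import structures.
From mathcomp Require Import all_boot all_order all_algebra all_field.
Set Implicit Arguments. Unset Strict Implicit. Unset Printing Implicit Defensive.
Import GRing.Theory.
Local Open Scope ring_scope.

(* A reduced polynomial T in F_q[X,Y,Z] is identified with the function
   F -> F -> F -> F it induces (reduced polynomials <-> functions). *)

(* The ranges 0..q-3 are written  i < q-2  (empty when q = 2). *)
Definition Tform (F : finFieldType) (b : nat -> nat -> nat -> F) (c : nat -> nat -> F)
  (x y z : F) : F :=
  let q := #|F| in
  z + x * y * z * (\sum_(i < q - 2) \sum_(j < q - 2) \sum_(k < q - 2)
                      b i j k * x ^+ i * y ^+ j * z ^+ k)
    + \sum_(1 <= i < q - 1) \sum_(1 <= j < q - 1) c i j * x ^+ i * y ^+ j.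

Definition is_PTR (F : finFieldType) (T : F -> F -> F -> F) : Prop :=
  [/\ (forall a b z : F, T a 0 z = z /\ T 0 b z = z),
      (forall x y : F, T x 1 0 = x /\ T 1 y 0 = y),
      (forall a b c d : F, a != c -> exists! x : F, T x a b = T x c d),
      (forall a b c : F, exists! z : F, T a b z = c) &
      (forall a b c d : F, a != c ->
         exists! yz : F * F, T a yz.1 yz.2 = b /\ T c yz.1 yz.2 = d)].

Definition PTR_add (F : finFieldType) (T : F -> F -> F -> F) (x y : F) := T 1 x y.
Definition PTR_mul (F : finFieldType) (T : F -> F -> F -> F) (x y : F) := T x y 0.

Definition is_linear_PTR (F : finFieldType) (T : F -> F -> F -> F) : Prop :=
  forall x y z : F, T x y z = PTR_add T (PTR_mul T x y) z.

(* Main.v *)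
Require Import Defs.
From mathcomp Require Import all_boot all_order all_algebra all_field.
From mathcomp Require Import zify.
Local Open Scope ring_scope.
Import GRing.Theory.

Lemma vanishX (F : finFieldType) n (E : nat -> F) : (n.+1 <= #|F|)%N ->
  (forall y, y * \sum_(a < n) E a * y ^+ a = 0) -> forall a, (a < n)%N -> E a = 0.
Proof.
move=> hn H a ha.
have hp : 'X * \poly_(i < n) E i = 0.
  apply: (@roots_geq_poly_eq0 _ _ (enum F)).
  - by apply/allP => y _; rewrite /root hornerM hornerX horner_poly H.
  - exact: enum_uniq.
  - rewrite -cardE; apply: leq_trans (size_polyMleq _ _) _.
    by rewrite size_polyX /=; apply: leq_trans hn; rewrite ltnS size_poly.
move/eqP: hp; rewrite mulf_eq0 polyX_eq0 /= => /eqP hp.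
have := congr1 (fun p : {poly F} => p`_a) hp.
by rewrite /= coef_poly ha coef0.
Qed.

Lemma S1E (F : finFieldType) n (b : nat -> nat -> nat -> F) (y z : F) :
  \sum_(i < n) \sum_(j < n) \sum_(k < n) b i j k * 1 ^+ i * y ^+ j * z ^+ k =
  \sum_(a < n) (\sum_(k < n) (\sum_(i < n) b i a k) * z ^+ k) * y ^+ a.
Proof.
rewrite exchange_big /=; apply: eq_bigr => a _.
rewrite exchange_big /= big_distrl /=; apply: eq_bigr => k _.
rewrite !big_distrl /=; apply: eq_bigr => i _.
by rewrite expr1n mulr1 mulrAC.
Qed.

Lemma S2E (F : finFieldType) n (b : nat -> nat -> nat -> F) (y z : F) :
  \sum_(i < n) \sum_(j < n) \sum_(k < n) b i j k * y ^+ i * 1 ^+ j * z ^+ k =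
  \sum_(a < n) (\sum_(k < n) (\sum_(i < n) b a i k) * z ^+ k) * y ^+ a.
Proof.
apply: eq_bigr => a _.
rewrite exchange_big /= big_distrl /=; apply: eq_bigr => k _.
rewrite !big_distrl /=; apply: eq_bigr => i _.
by rewrite expr1n mulr1 mulrAC.
Qed.

Theorem corollary4p9 (F : finFieldType) (b : nat -> nat -> nat -> F) (c : nat -> nat -> F) :
  is_PTR (Tform b c) -> is_linear_PTR (Tform b c) ->
  forall j k : nat, (j < #|F| - 2)%N -> (1 <= k < #|F| - 2)%N ->
    \sum_(i < #|F| - 2) b i j k = \sum_(i < #|F| - 2) b j i k.
Proof.
move=> [_ hb _ _ _] hlin j k hj /andP [_ hk].
have key : forall y z : F, Tform b c y 1 z = Tform b c 1 y z.
  move=> y z; rewrite hlin /PTR_add /PTR_mul; by case: (hb y y) => ->.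
set n := (#|F| - 2)%N.
have hn : (n.+1 <= #|F|)%N by rewrite /n; lia.
set D := fun a k => \sum_(i < n) b i a k - \sum_(i < n) b a i k.
have M : forall y z : F,
    y * \sum_(a < n) (z * \sum_(k < n) D a k * z ^+ k) * y ^+ a = 0.
  move=> y z.
  have k0 := key y 0; have kz := key y z.
  move: k0 kz; rewrite /Tform -/n !mulr0 !mul0r !add0r => ->.
  move/addIr => /addrI.
  rewrite S1E S2E => E.
  have -> : \sum_(a < n) (z * \sum_(k < n) D a k * z ^+ k) * y ^+ a =
    z * (\sum_(a < n) (\sum_(k < n) (\sum_(i < n) b i a k) * z ^+ k) * y ^+ a -
         \sum_(a < n) (\sum_(k < n) (\sum_(i < n) b a i k) * z ^+ k) * y ^+ a).
    rewrite -sumrB big_distrr /=; apply: eq_bigr => a _.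
    by rewrite -mulrBl -sumrB mulrA; congr (_ * _ * _); apply: eq_bigr => l _; rewrite mulrBl.
  rewrite !mulr1 !mul1r in E.
  by rewrite mulrA mulrBr E subrr.
apply/eqP; rewrite -subr_eq0; apply/eqP.
have Ha : forall z : F, z * \sum_(l < n) D j l * z ^+ l = 0.
  by move=> z; apply: (@vanishX F n (fun a => z * \sum_(l < n) D a l * z ^+ l) hn (M ^~ z) j hj).
exact: (@vanishX F n (D j) hn Ha k hk).
Qed.
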